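(* Consider a $K$-armed bandit ($K\ge 2$) with reward vector $r\in[0,1]^K$ having distinct entries, optimal value $V^*=\max_a r(a)$, and let $\pi_t$ be generated by the discrete EG iteration $\pi_{t+1}(a)=\pi_t(a)e^{\eta f_t(a)}/Z_t$ with a sufficiently small constant learning rate $\eta>0$ (as required for this iteration to converge to the optimal one-hot policy). Then the sub-optimality $\delta_t:=V^*-V_t$, where $V_t:=\pi_t^\top r$, satisfies $\delta_t=O(1/t)$.
   Context: Policies are softmax policies $\pi_\theta(a)=e^{\theta(a)}/\sum_{a'}e^{\theta(a')}$. At iteration $t$, $U_t(a):=r(a)-\pi_t^\top r$, $f_t(a):=U_t(a)\mathbf{1}\{U_t(a)>0\}$, $Z_t:=\sum_{a'}\pi_t(a')e^{\eta f_t(a')}$. *)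

(* Defs.v *)
From HB Require Import structures.
From mathcomp Require Import all_boot all_order all_algebra.
From mathcomp Require Import all_classical all_reals all_analysis.
Set Implicit Arguments. Unset Strict Implicit. Unset Printing Implicit Defensive.
Import Order.TTheory GRing.Theory Num.Theory.
Local Open Scope ring_scope.

Section EG.
Variables (R : realType) (K : nat).

Definition softmax (theta : 'I_K -> R) : 'I_K -> R :=
  fun a => expR (theta a) / \sum_(a' < K) expR (theta a').

Definition value (r pi : 'I_K -> R) : R := \sum_(a < K) pi a * r a.

Definition adv (r pi : 'I_K -> R) (a : 'I_K) : R := r a - value r pi.

Definition fpos (r pi : 'I_K -> R) (a : 'I_K) : R :=
  if 0 < adv r pi a then adv r pi a else 0.

Definition Zn (eta : R) (r pi : 'I_K -> R) : R :=
  \sum_(a' < K) pi a' * expR (eta * fpos r pi a').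

Definition eg_step (eta : R) (r pi : 'I_K -> R) : 'I_K -> R :=
  fun a => pi a * expR (eta * fpos r pi a) / Zn eta r pi.

Fixpoint eg_iter (eta : R) (r pi0 : 'I_K -> R) (t : nat) : 'I_K -> R :=
  match t with
  | 0 => pi0
  | t'.+1 => eg_step eta r (eg_iter eta r pi0 t')
  end.

End EG.

(* Main.v *)
Require Import Defs.
From HB Require Import structures.
From mathcomp Require Import all_boot all_order all_algebra.
From mathcomp Require Import all_classical all_reals all_analysis.
From mathcomp Require Import ring lra.
Import Order.TTheory GRing.Theory Num.Theory.
Local Open Scope ring_scope.

Lemma expR_quad (R : realType) (x : R) : 0 <= x -> x <= 1/2 -> expR x <= 1 + x + 2 * x^+2.
Proof.
move=> h0 h1.
have h := expR_ge1Dx (- x).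
rewrite expRN in h.
have E0 := expR_gt0 x.
have h2 : (1 - x) * expR x <= 1.
  rewrite -(ler_pM2r E0) mulVf ?gt_eqF // in h.
have h3 : 1 <= (1 - x) * (1 + x + 2 * x^+2) by nra.
nra.
Qed.

Lemma sum_star (R : realType) (K : nat) (astar : 'I_K) (F : 'I_K -> R) :
  \sum_a F a = F astar + \sum_(a | a != astar) F a.
Proof. by rewrite (bigD1 astar). Qed.
Arguments sum_star {R K} astar F.

Lemma step_facts (R : realType) (K : nat) (r : 'I_K -> R) (astar : 'I_K) (g eta : R)
  (pi : 'I_K -> R) :
  (forall a, 0 <= r a <= 1) -> (forall a, r a <= r astar) ->
  0 < g -> g <= 1 -> (forall a, a != astar -> g <= r astar - r a) ->
  0 < eta -> eta <= g / 4 ->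
  (forall a, 0 <= pi a) -> \sum_a pi a = 1 ->
  let d := r astar - value r pi in
  let q := 1 - pi astar in
  [/\ d <= q, g * q <= d, 1 <= Zn eta r pi &
   pi astar * (1 + eta * g * q * d / 4) <= eg_step eta r pi astar].
Proof.
move=> hr hmax g0 g1 hg eta0 etag pi0 pi1 d q.
have hq : q = \sum_(a | a != astar) pi a.
  by rewrite /q -pi1 (sum_star astar) addrC addKr.
have hd : d = \sum_(a | a != astar) pi a * (r astar - r a).
  rewrite /d /value.
  have {1}-> : r astar = \sum_a pi a * r astar by rewrite -mulr_suml pi1 mul1r.
  rewrite -sumrB (sum_star astar) subrr add0r.
  by apply: eq_bigr => a _; rewrite mulrBr.
have dq : d <= q.
  rewrite hd hq; apply: ler_sum => a _.
  have := hr a; have := hr astar; have := pi0 a; nra.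
have gqd : g * q <= d.
  rewrite hd hq mulr_sumr; apply: ler_sum => a ha.
  have := hg a ha; have := pi0 a; nra.
have q0 : 0 <= q by rewrite hq; apply: sumr_ge0 => a _.
have q1 : q <= 1 by rewrite /q; have := pi0 astar; lra.
have d0 : 0 <= d by nra.
set f := fpos r pi.
have hf : forall a, 0 <= f a <= d.
  move=> a; rewrite /f /fpos /adv.
  case: ifP => h; last by rewrite lexx d0.
  have := hmax a; rewrite /d; lra.
have hf1 : forall a, a != astar -> g * d <= d - f a.
  move=> a ha; rewrite /f /fpos /adv.
  have := hg a ha.
  have e : d - (r a - value r pi) = r astar - r a by rewrite /d; lra.
  case: ifP => h; rewrite ?subr0 ?e; nra.
set F := \sum_a pi a * f a.
have F0 : 0 <= F by apply: sumr_ge0 => a _; have := hf a; have := pi0 a; nra.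
have Fd : F <= d.
  have -> : d = \sum_a pi a * d by rewrite -mulr_suml pi1 mul1r.
  apply: ler_sum => a _; have := hf a; have := pi0 a; nra.
have dF : g * q * d <= d - F.
  have -> : d - F = \sum_a pi a * (d - f a).
    have e1 : \sum_a pi a * d = d by rewrite -mulr_suml pi1 mul1r.
    rewrite -[d in LHS]e1 /F -sumrB.
    by apply: eq_bigr => a _; exact: (esym (mulrBr _ _ _)).
  rewrite (sum_star astar) hq mulr_sumr mulr_suml.
  have h1 : 0 <= pi astar * (d - f astar) by have := hf astar; have := pi0 astar; nra.
  suff : \sum_(i | i != astar) g * pi i * d <= \sum_(i | i != astar) pi i * (d - f i) by lra.
  apply: ler_sum => a ha; have := hf1 a ha; have := pi0 a; nra.
have Zlo : 1 <= Zn eta r pi.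
  rewrite /Zn -[X in X <= _]pi1; apply: ler_sum => a _.
  have h1 : 1 <= expR (eta * fpos r pi a).
    have := expR_ge1Dx (eta * fpos r pi a); have := hf a; rewrite /f; nra.
  have := pi0 a; nra.
have eta4 : eta <= 1/4 by lra.
have Zhi : Zn eta r pi <= 1 + (eta + 2 * eta^+2 * d) * F.
  have e1 : \sum_a pi a * (1 + (eta + 2 * eta^+2 * d) * f a)
       = 1 + (eta + 2 * eta^+2 * d) * F.
    rewrite /F mulr_sumr -pi1 -big_split /= pi1.
    by apply: eq_bigr => a _; ring.
  rewrite -e1 /Zn; apply: ler_sum => a _.
  have := hf a; rewrite /f => hfa.
  have h2 := @expR_quad R (eta * fpos r pi a).
  have hx0 : 0 <= eta * fpos r pi a by nra.
  have hx1 : eta * fpos r pi a <= 1/2 by nra.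
  have h3 := h2 hx0 hx1.
  have h4 : (eta * fpos r pi a)^+2 <= eta^+2 * d * fpos r pi a.
    have h5 : fpos r pi a ^+ 2 <= d * fpos r pi a by nra.
    rewrite exprMn -mulrA; apply: ler_wpM2l => //; exact: sqr_ge0.
  have := pi0 a; nra.
have fstar : f astar = d.
  rewrite /f /fpos /adv; case: ifP => // h.
  have : d <= 0 by rewrite /d /value; move/negbT: h; rewrite -leNgt.
  lra.
have Ep := expR_ge1Dx (eta * d).
have Zlo0 : 0 < Zn eta r pi by lra.
rewrite /eg_step -/f fstar ler_pdivlMr //.
have p0 := pi0 astar.
split => //.
suff key : (1 + eta * g * q * d / 4) * Zn eta r pi <= expR (eta * d).
  by rewrite -[X in X <= _]mulrA; apply: ler_wpM2l.
have k0 : d * F <= q * d.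
  have : d * F <= d * q by apply: ler_wpM2l => //; lra.
  lra.
have qd0 : 0 <= q * d by apply: mulr_ge0.
have k1 : 2 * eta * d * F <= 2 * eta * q * d.
  have : (2 * eta) * (d * F) <= (2 * eta) * (q * d) by apply: ler_wpM2l => //; lra.
  by rewrite !mulrA.
have k2 : 2 * eta * q * d <= g/2 * q * d.
  have : (2 * eta) * (q * d) <= (g/2) * (q * d) by apply: ler_wpM2r => //; lra.
  by rewrite !mulrA.
have k3 : 0 <= eta * g * q * d.
  by apply/mulr_ge0 => //; apply/mulr_ge0 => //; apply/mulr_ge0; lra.
have d1 : d <= 1 by lra.
have c1 : eta + 2 * eta^+2 * d <= 1.
  have : eta^+2 * d <= 1/16.
    have : eta^+2 <= 1/16 by nra.
    have : 0 <= eta^+2 by exact: sqr_ge0.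
    nra.
  lra.
have c0 : 0 <= eta + 2 * eta^+2 * d.
  have : 0 <= eta^+2 * d by apply: mulr_ge0 => //; exact: sqr_ge0.
  lra.
have F1 : F <= 1 by lra.
have cF : (eta + 2 * eta^+2 * d) * F <= 1.
  have : (eta + 2 * eta^+2 * d) * F <= 1 * 1 by apply: ler_pM.
  by rewrite mulr1.
have Z2 : Zn eta r pi <= 2 by lra.
set Z := Zn eta r pi in Z2 Zhi Zlo0 *.
have k5 : (1 + eta * g * q * d / 4) * Z <= Z + eta * g * q * d / 2 by nra.
have k6 : eta * (2 * eta * d * F) <= eta * (g/2 * q * d) by apply: ler_wpM2l => //; lra.
have k7 : eta * (g * q * d) <= eta * (d - F) by apply: ler_wpM2l => //; lra.
have e2 : (eta + 2 * eta^+2 * d) * F = eta * F + eta * (2 * eta * d * F) by ring.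
have e3 : eta * g * q * d = eta * (g * q * d) by ring.
have e4 : eta * (g / 2 * q * d) = eta * (g * q * d) / 2 by ring.
have e5 : eta * (d - F) = eta * d - eta * F by ring.
lra.
Qed.

Lemma fpos_ge0 (R : realType) (K : nat) (r pi : 'I_K -> R) a : 0 <= fpos r pi a.
Proof. by rewrite /fpos; case: ifP => // /ltW. Qed.
Arguments fpos_ge0 {R K} r pi a.

Lemma step_inv (R : realType) (K : nat) (r : 'I_K -> R) (eta : R) (pi : 'I_K -> R) :
  0 < eta -> (forall a, 0 <= pi a) -> \sum_a pi a = 1 ->
  (forall a, 0 <= eg_step eta r pi a) /\ \sum_a eg_step eta r pi a = 1.
Proof.
move=> eta0 pi0 pi1.
have Zlo : 1 <= Zn eta r pi.
  rewrite /Zn -[X in X <= _]pi1; apply: ler_sum => a _.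
  have h1 : 1 <= expR (eta * fpos r pi a).
    have := expR_ge1Dx (eta * fpos r pi a); have := fpos_ge0 r pi a; nra.
  have := pi0 a; nra.
split.
  move=> a; rewrite /eg_step; apply: divr_ge0; last by lra.
  by apply: mulr_ge0 => //; exact: expR_ge0.
by rewrite /eg_step -mulr_suml -/(Zn eta r pi) divff // gt_eqF //; lra.
Qed.

Lemma softmax_inv (R : realType) (K : nat) (theta : 'I_K -> R) (astar : 'I_K) :
  (forall a, 0 <= softmax theta a) /\ \sum_a softmax theta a = 1 /\ 0 < softmax theta astar.
Proof.
have S0 : 0 < \sum_a expR (theta a).
  rewrite (bigD1 astar) //=; apply: ltr_pwDl; first exact: expR_gt0.
  by apply: sumr_ge0 => a _; exact: expR_ge0.
split; [|split].
- by move=> a; rewrite /softmax; apply: divr_ge0; [exact: expR_ge0 | exact: ltW].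
- by rewrite /softmax -mulr_suml divff // gt_eqF.
- by rewrite /softmax; apply: divr_gt0 => //; exact: expR_gt0.
Qed.

Lemma gap_exists (R : realType) (K : nat) (r : 'I_K -> R) (astar : 'I_K) :
  (forall a, 0 <= r a <= 1) -> injective r -> (forall a, r a <= r astar) ->
  exists g : R, [/\ 0 < g, g <= 1 & forall a, a != astar -> g <= r astar - r a].
Proof.
move=> hr hinj hmax.
have fac : forall a, a != astar -> 0 < r astar - r a <= 1.
  move=> a ha; apply/andP; split; last by have := hr a; have := hr astar; lra.
  rewrite subr_gt0 lt_neqAle hmax andbT; apply/eqP => e.
  by move/eqP: ha; apply; apply: hinj.
exists (\prod_(a | a != astar) (r astar - r a)); split.
- by apply: prodr_gt0 => a ha; case/andP: (fac a ha).
- by apply: prodr_ile1 => a ha; case/andP: (fac a ha) => /ltW -> ->.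
- move=> b hb; rewrite (bigD1 b) //=.
  have h1 : \prod_(i | (i != astar) && (i != b)) (r astar - r i) <= 1.
    apply: prodr_ile1 => a /andP [ha _]; case/andP: (fac a ha) => /ltW -> ->.
    by [].
  have h0 : 0 <= \prod_(i | (i != astar) && (i != b)) (r astar - r i).
    by apply: prodr_ge0 => a /andP [ha _]; case/andP: (fac a ha) => /ltW.
  case/andP: (fac b hb) => hb0 _; nra.
Qed.

Theorem corollary1 (R : realType) (K : nat) (r : 'I_K -> R) :
  (2 <= K)%N ->
  (forall a, 0 <= r a <= 1) ->
  injective r ->
  forall astar : 'I_K, (forall a, r a <= r astar) ->
  exists eta0 : R, 0 < eta0 /\
    forall eta : R, 0 < eta -> eta <= eta0 ->
    forall theta0 : 'I_K -> R,
    exists C : R, forall t : nat,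
      (* V^* = r(astar) = max_a r(a); delta_t <= C/(t+1) *)
      r astar - value r (eg_iter eta r (softmax theta0) t) <= C / t.+1%:R.
Proof.
move=> _ hr hinj astar hmax.
have [g [g0 g1 hg]] := @gap_exists _ _ r astar hr hinj hmax.
exists (g / 4); split; first lra.
move=> eta eta0 etag theta0.
have [s0 [s1 s2]] := @softmax_inv _ _ theta0 astar.
set p0 := softmax theta0 astar in s2.
set b := p0 * (eta * g ^+ 2 / 4).
have p01 : p0 <= 1.
  rewrite -s1 (sum_star astar) lerDl; exact: sumr_ge0.
have b0 : 0 < b.
  apply: mulr_gt0 => //; apply: divr_gt0 => //; apply: mulr_gt0 => //.
  exact: exprn_gt0.
have b1 : b <= 1/16.
  have : g ^+ 2 <= 1 by rewrite expr_le1 // ltW.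
  have : 0 <= g ^+ 2 by exact: sqr_ge0.
  move=> h0 h1.
  have : eta * g ^+ 2 / 4 <= 1/16 by nra.
  have : 0 <= eta * g ^+ 2 / 4 by apply: divr_ge0 => //; apply: mulr_ge0 => //; lra.
  rewrite /b; nra.
set pi := eg_iter eta r (softmax theta0).
have inv : forall t, [/\ (forall a, 0 <= pi t a), \sum_a pi t a = 1,
    p0 <= pi t astar & (1 - pi t astar) * (1 + b * t%:R) <= 1].
  elim=> [|t [h0 h1 h2 h3]].
    rewrite /pi /= mulr0 addr0 mulr1 -/p0; split; [exact: s0 | exact: s1 | exact: lexx | lra].
  have [h0' h1'] := @step_inv _ _ r eta (pi t) eta0 h0 h1.
  have [dq gqd _ hp] := @step_facts _ _ r astar g eta (pi t) hr hmax g0 g1 hg eta0 etag h0 h1.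
  rewrite /pi /=; rewrite -/(pi t).
  set p := pi t astar in h2 h3 dq gqd hp *.
  set q := 1 - p in h3 dq gqd hp *.
  set d := r astar - value r (pi t) in dq gqd hp *.
  set p' := eg_step eta r (pi t) astar in hp *.
  have q0 : 0 <= q.
    have : p <= 1 by rewrite /p -h1 (sum_star astar) lerDl; exact: sumr_ge0.
    rewrite /q; lra.
  have d0 : 0 <= d by nra.
  have e1 : 0 <= eta * g * q * d / 4.
    by apply: divr_ge0 => //; apply/mulr_ge0 => //; apply/mulr_ge0 => //; apply/mulr_ge0; lra.
  have pp : p <= p' by nra.
  split => //; first lra.
  have k1 : p0 * (eta * g * q * d / 4) <= p * (eta * g * q * d / 4) by apply: ler_wpM2r.
  have k2 : eta * g * (g * q) * q / 4 <= eta * g * d * q / 4.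
    rewrite -!mulrA; apply: ler_wpM2l; first lra.
    apply: ler_wpM2l; first lra.
    by rewrite mulrA; apply: ler_wpM2r => //; apply: divr_ge0.
  have hq' : 1 - p' <= q - b * q ^+ 2.
    have e2 : b * q ^+ 2 = p0 * (eta * g * (g * q) * q / 4) by rewrite /b; ring.
    have e3 : p0 * (eta * g * q * d / 4) = p0 * (eta * g * d * q / 4) by ring.
    have k3 : p0 * (eta * g * (g * q) * q / 4) <= p0 * (eta * g * d * q / 4).
      by apply: ler_wpM2l => //; exact: ltW.
    have k4 : p * (eta * g * q * d / 4) <= p' - p by lra.
    have hqd : q = 1 - p by []. 
    lra.
  set s := 1 + b * t%:R in h3.
  have s1' : 1 <= s.
    have : 0 <= b * t%:R by apply: mulr_ge0 => //; exact: ltW.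
    rewrite /s; lra.
  have -> : 1 + b * t.+1%:R = s + b by rewrite /s -addn1 natrD; ring.
  set u := q * s in h3.
  have qu : q <= u by rewrite /u; nra.
  have k5 : (1 - p') * (s + b) <= (q - b * q ^+ 2) * (s + b) by apply: ler_wpM2r => //; lra.
  have e4 : (q - b * q ^+ 2) * (s + b) = u + q * b * (1 - u) - b ^+ 2 * q ^+ 2 by rewrite /u; ring.
  have k6 : q * b * (1 - u) <= u * b * (1 - u).
    apply: ler_wpM2r; first lra. by apply: ler_wpM2r => //; exact: ltW.
  have k7 : 0 <= (1 - u) * (1 - b * u) by apply: mulr_ge0; nra.
  have k8 : 0 <= b ^+ 2 * q ^+ 2 by apply: mulr_ge0; exact: sqr_ge0.
  nra.
exists (1 / b) => t.
have [h0 h1 h2 h3] := inv t.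
have [dq _ _ _] := @step_facts _ _ r astar g eta (pi t) hr hmax g0 g1 hg eta0 etag h0 h1.
have tp : 0 < t.+1%:R :> R by rewrite ltr0n.
rewrite ler_pdivlMr // ler_pdivlMr //.
have -> : t.+1%:R = t%:R + 1 :> R by rewrite -addn1 natrD.
have t0 : 0 <= t%:R :> R by rewrite ler0n.
set q := 1 - pi t astar in h3 dq.
set d := r astar - value r (pi t) in dq *.
have q0 : 0 <= q.
  have : pi t astar <= 1 by rewrite -h1 (sum_star astar) lerDl; exact: sumr_ge0.
  rewrite /q; lra.
have k1 : b * (t%:R + 1) <= 1 + b * t%:R by lra.
have k2 : q * (b * (t%:R + 1)) <= q * (1 + b * t%:R) by apply: ler_wpM2l.
have k3 : d * (t%:R + 1) <= q * (t%:R + 1) by apply: ler_wpM2r => //; lra.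
have k4 : d * (t%:R + 1) * b <= q * (t%:R + 1) * b by apply: ler_wpM2r => //; exact: ltW.
have e : q * (t%:R + 1) * b = q * (b * (t%:R + 1)) by ring.
lra.
Qed.
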